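(* In the multi-hop VAoI network described in the context, for each $i\in\{1,\dots,N\}$ the VAoI at node $i+1$ satisfies \[ \Delta_{i+1}(t)=\Delta_i(t-m_i)+\eta_{m_i}, \] where $m_i$ (the number of slots back to the last successful delivery on link $i$, so that $V_{i+1}(t)=V_i(t-m_i)$) is a geometric random variable with parameter $\rho_i$, $\mathbb{P}(m_i=\ell)=(1-\rho_i)^{\ell-1}\rho_i$ for $\ell=1,2,\dots$, and $\eta_k=V_S(t)-V_S(t-k)$ (the number of source versions generated in the last $k$ slots) is, for given $k$, a binomial random variable with parameters $k$ and $p_g$: $\mathbb{P}(\eta_k=r\mid k)=\binom{k}{r}p_g^r(1-p_g)^{k-r}$, $r=0,\dots,k$.
   Context: Time is slotted. A source generates a new version in each slot independently with probability $p_g$, and its version index $V_S(t)$ increases by one at the start of the slot following each generation. Nodes $0,1,\dots,N+1$ form a line; node $0$ always holds the current source version ($V_0(t)=V_S(t)$), node $N+1$ is the destination, and nodes $1,\dots,N$ are relays. Each node stores only the latest version it has received. Link $i$ (from node $i$ to node $i+1$) delivers a transmission successfully with probability $\rho_i$, independently across slots and links ($\rho_0=p_s$). Node $0$ transmits according to an update policy; each relay node $i\ge1$ transmits its stored version in every slot, so that $V_{i+1}(t+1)=V_i(t)$ if the transmission on link $i$ at slot $t$ succeeds and $V_{i+1}(t+1)=V_{i+1}(t)$ otherwise. The VAoI at node $j$ is $\Delta_j(t)=V_S(t)-V_j(t)$. *)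

(* Defs.v *)
From HB Require Import structures.
From mathcomp Require Import all_boot all_order all_algebra.
From mathcomp Require Import all_classical all_reals all_analysis.
Set Implicit Arguments. Unset Strict Implicit. Unset Printing Implicit Defensive.
Import Order.TTheory GRing.Theory Num.Theory.
Local Open Scope classical_set_scope.
Local Open Scope ring_scope.

Definition mutually_independent (d : measure_display) (T : measurableType d)
  (R : realType) (P : probability T R) (I : eqType) (E : I -> set T) : Prop :=
  forall s : seq I, uniq s ->
    P (\big[setI/setT]_(j <- s) E j) = (\prod_(j <- s) P (E j))%E.

(* Index of the elementary random events of the model:
   inl s        = "the source generates a new version in slot s",
   inr (i, s)   = "the transmission on link i at slot s succeeds". *)
Definition ev_index := (int + (nat * int))%type.

Definition model_events (T : Type) (gen : int -> set T)
  (succ : nat -> int -> set T) : ev_index -> set T :=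
  fun e => match e with inl s => gen s | inr p => succ p.1 p.2 end.

(* m i t w : number of slots back to the last successful delivery on link i
   strictly before slot t, i.e. the least l >= 1 such that the transmission on
   link i at slot t - l succeeded (0 if there is no such slot). *)
Definition last_succ (T : Type) (succ : nat -> int -> set T) (i : nat) (t : int)
  (w : T) : nat :=
  let p := fun l : nat => `[< (0 < l)%N /\ succ i (t - l%:Z) w >] in
  match pselect (exists l, p l) with
  | left h => ex_minn h
  | right _ => 0%N
  end.

Definition vaoi (T : Type) (VS : int -> T -> int) (V : nat -> int -> T -> int)
  (j : nat) (t : int) (w : T) : int := VS t w - V j t w.

Definition new_versions (T : Type) (VS : int -> T -> int) (k : nat) (t : int) (w : T) : int :=
  VS t w - VS (t - k%:Z) w.

(* Main.v *)
Require Import Defs.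
From HB Require Import structures.
From mathcomp Require Import all_boot all_order all_algebra.
From mathcomp Require Import all_classical all_reals all_analysis.
From mathcomp Require Import ring lra zify.
Import Order.TTheory GRing.Theory Num.Theory.
Local Open Scope classical_set_scope.
Local Open Scope ring_scope.

Set Implicit Arguments. Unset Strict Implicit.
Section Gen.
Variables (R : realType) (d : measure_display) (T : measurableType d)
  (P : probability T R) (I : eqType) (E : I -> set T) (q : I -> R).
Hypothesis mE : forall j, measurable (E j).
Hypothesis PE : forall j, P (E j) = (q j)%:E.
Hypothesis Hind : mutually_independent P E.

Definition sgn (u : seq (I * bool)) : set T :=
  \big[setI/setT]_(x <- u) (if x.2 then E x.1 else ~` E x.1).
Definition sq (u : seq (I * bool)) : R :=
  \prod_(x <- u) (if x.2 then q x.1 else 1 - q x.1).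

Lemma bigI_meas (J : Type) (s : seq J) (F : J -> set T) :
  (forall j, measurable (F j)) -> measurable (\big[setI/setT]_(j <- s) F j).
Proof.
move=> mF; elim: s => [|j s IH]; first by rewrite big_nil.
by rewrite big_cons; apply: measurableI.
Qed.

Lemma sgn_meas u : measurable (sgn u).
Proof. by apply: bigI_meas => -[j []] /=; [|apply: measurableC]. Qed.

Lemma sgn_gen u v : uniq (v ++ map fst u) ->
  P (\big[setI/setT]_(j <- v) E j `&` sgn u) = ((\prod_(j <- v) q j) * sq u)%:E.
Proof.
elim: u v => [|[j b] u IH] v Hu.
  rewrite /sgn /sq !big_nil setIT mulr1 Hind; last by rewrite cats0 in Hu.
  by rewrite -prodEFin; apply: eq_bigr => k _; rewrite PE.
have Hu' : uniq ((j :: v) ++ map fst u).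
  by have := Hu; rewrite -(perm_uniq (introT permPl (perm_catCA v [:: j] (map fst u)))).
have Hv : uniq (v ++ map fst u) by apply: (subseq_uniq _ Hu'); apply: subseq_cons.
rewrite /sgn /sq !big_cons /= -/(sgn u) -/(sq u); case: b {Hu}.
  rewrite setIA [_ `&` E j]setIC.
  have := IH (j :: v) Hu'; rewrite big_cons => ->.
  congr (_%:E); rewrite big_cons; ring.
rewrite [~` E j `&` _]setIC setIA -setDE.
have E1 := IH v Hv.
have E2 := IH (j :: v) Hu'; rewrite !big_cons in E2.
rewrite measureD; first last.
- apply: (le_lt_trans (probability_le1 P _)); last exact: ltry.
  by apply: measurableI; [apply: bigI_meas | apply: sgn_meas].
- exact: mE.
- by apply: measurableI; [apply: bigI_meas | apply: sgn_meas].
have -> : \big[setI/setT]_(j0 <- v) E j0 `&` sgn u `&` E j = E j `&` \big[setI/setT]_(j0 <- v) E j0 `&` sgn u.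
  by rewrite setIC setIA.
transitivity ((\prod_(j0 <- v) q j0 * sq u)%:E - (q j * \prod_(j0 <- v) q j0 * sq u)%:E)%E.
  by rewrite -E1 -E2.
rewrite -EFinB; congr (_%:E); ring.
Qed.

Lemma sgnP u : uniq (map fst u) -> P (sgn u) = (sq u)%:E.
Proof. by move=> Hu; have := @sgn_gen u [::] Hu; rewrite !big_nil setTI mul1r. Qed.


Definition cnt (s : seq I) (w : T) : nat := count (fun j => `[< E j w >]) s.

Lemma cnt_cons j s r : [set w | cnt (j :: s) w = r] =
  (if r is r'.+1 then E j `&` [set w | cnt s w = r'] else set0)
  `|` (~` E j `&` [set w | cnt s w = r]).
Proof.
apply/seteqP; split => w /=; rewrite /cnt /=;
  case: (asboolP (E j w)) => h; case: r => [|r] /=.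
- lia.
- by move=> H; left; split => //; lia.
- by move=> H; right; split.
- by move=> H; right; split => //; lia.
- by case=> // -[].
- by case=> -[] //= _ H; lia.
- by case=> // -[].
- by case=> -[] // _ H; lia.
Qed.

Lemma cnt_meas s r : measurable [set w | cnt s w = r].
Proof.
elim: s r => [|j s IH] r.
  rewrite /cnt /=; case: r => [|r].
    by have -> : [set w : T | 0%N = 0%N] = setT by apply/seteqP; split.
  by have -> : [set w : T | 0%N = r.+1] = set0 by apply/seteqP; split.
rewrite cnt_cons; apply: measurableU.
  by case: r => [|r] //; apply: measurableI.
by apply: measurableI => //; apply: measurableC.
Qed.

Lemma PU A B : measurable A -> measurable B -> A `&` B = set0 ->
  P (A `|` B) = (P A + P B)%E.
Proof. by move=> mA mB AB; rewrite measureU. Qed.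

Lemma sgn_cons x u : sgn (x :: u) = (if x.2 then E x.1 else ~` E x.1) `&` sgn u.
Proof. by rewrite /sgn big_cons. Qed.

Lemma sq_cons x u : sq (x :: u) = (if x.2 then q x.1 else 1 - q x.1) * sq u.
Proof. by rewrite /sq big_cons. Qed.

Lemma sgnE u w : sgn u w <-> forall x, x \in u -> (if x.2 then E x.1 else ~` E x.1) w.
Proof.
elim: u => [|x u IH]; first by rewrite /sgn big_nil; split.
rewrite sgn_cons; split.
  by case=> h1 /IH h2 y; rewrite inE => /orP[/eqP ->|/h2].
move=> H; split; first by apply: H; rewrite inE eqxx.
by apply/IH => y yu; apply: H; rewrite inE yu orbT.
Qed.

Lemma Ple A B : measurable A -> measurable B -> A `<=` B -> (P A <= P B)%E.
Proof. by move=> mA mB AB; apply: le_measure; rewrite ?inE. Qed.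

Lemma prod_const (J : Type) (s : seq J) (c : R) : \prod_(x <- s) c = c ^+ size s.
Proof. by elim: s => [|x s IH]; rewrite ?big_nil ?big_cons ?IH ?exprS. Qed.

Variable p : R.
Definition Bn n r : R := 'C(n, r)%:R * p ^+ r * (1 - p) ^+ (n - r).

Lemma Bn_S n r : Bn n.+1 r.+1 = p * Bn n r + (1 - p) * Bn n r.+1.
Proof.
rewrite /Bn binS natrD subSS.
case: (ltnP r n) => Hrn.
  have -> : (n - r = (n - r.+1).+1)%N by lia.
  rewrite !exprS; ring.
rewrite bin_small; last by lia.
rewrite exprS; ring.
Qed.

Lemma Bn_S0 n : Bn n.+1 0 = (1 - p) * Bn n 0.
Proof. by rewrite /Bn !bin0 !subn0 exprS; ring. Qed.

Lemma cntP s u r : uniq (map fst u ++ s) -> (forall j, j \in s -> q j = p) ->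
  P (sgn u `&` [set w | cnt s w = r]) = (sq u * Bn (size s) r)%:E.
Proof.
elim: s u r => [|j s IH] u r Hu Hq.
  have Hu0 : uniq (map fst u) by rewrite cats0 in Hu.
  rewrite /cnt /=; case: r => [|r].
    have -> : [set w : T | 0%N = 0%N] = setT by apply/seteqP; split.
    by rewrite setIT sgnP // /Bn /= !mulr1.
  have -> : [set w : T | 0%N = r.+1] = set0 by apply/seteqP; split.
  by rewrite setI0 measure0 /Bn /= !mul0r mulr0.
have Hu' : forall b, uniq (map fst ((j, b) :: u) ++ s).
  by move=> b; have := Hu; rewrite -(perm_uniq (introT permPl (perm_catCA (map fst u) [:: j] s))).
have Hq' : forall k, k \in s -> q k = p by move=> k ks; apply: Hq; rewrite inE ks orbT.
have Hqj : q j = p by apply: Hq; rewrite inE eqxx.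
rewrite cnt_cons /=; case: r => [|r].
  rewrite set0U setIA [sgn u `&` _]setIC.
  have -> : ~` E j `&` sgn u = sgn ((j, false) :: u) by rewrite sgn_cons.
  rewrite IH //; congr (_%:E); rewrite sq_cons Bn_S0 /= Hqj; ring.
rewrite setIUr PU; first last.
- apply/seteqP; split => w //= [[_ [h _]] [_ [h' _]]]; exact: h' h.
- by apply: measurableI; [apply: sgn_meas | apply: measurableI; [apply: measurableC | apply: cnt_meas]].
- by apply: measurableI; [apply: sgn_meas | apply: measurableI; [ | apply: cnt_meas]].
rewrite !setIA ![sgn u `&` _]setIC.
have -> : ~` E j `&` sgn u = sgn ((j, false) :: u) by rewrite sgn_cons.
have -> : E j `&` sgn u = sgn ((j, true) :: u) by rewrite sgn_cons.
rewrite !IH // -EFinD; congr (_%:E); rewrite !sq_cons Bn_S /= Hqj; ring.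
Qed.

End Gen.

Unset Implicit Arguments.

Theorem proposition4 (R : realType) (d : measure_display) (T : measurableType d)
  (P : probability T R) (N : nat) (pg : R) (rho : nat -> R)
  (gen : int -> set T) (succ : nat -> int -> set T)
  (VS : int -> T -> int) (V : nat -> int -> T -> int) :
  (forall s, measurable (gen s)) ->
  (forall i s, measurable (succ i s)) ->
  (forall s, P (gen s) = pg%:E) ->
  (forall i s, P (succ i s) = (rho i)%:E) ->
  mutually_independent P (model_events gen succ) ->
  (forall i, (1 <= i <= N)%N -> 0 < rho i) ->
  (* source version counter: increases by one after each generation *)
  (forall s w, VS (s + 1) w = VS s w + (`[< gen s w >] : nat)%:Z) ->
  (* node 0 always holds the current source version *)
  (forall t w, V 0%N t w = VS t w) ->
  (* relays transmit their stored version in every slot *)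
  (forall i t w, (1 <= i <= N)%N ->
     V i.+1 (t + 1) w = if `[< succ i t w >] then V i t w else V i.+1 t w) ->
  forall i : nat, (1 <= i <= N)%N -> forall t : int,
    let m := fun w => last_succ succ i t w in
    (almost_everywhere P [set w | V i.+1 t w = V i (t - (m w)%:Z) w]
    /\ almost_everywhere P [set w |
          vaoi VS V i.+1 t w = vaoi VS V i (t - (m w)%:Z) w + new_versions VS (m w) t w])
    /\ (forall l : nat, (1 <= l)%N ->
          P [set w | m w = l] = ((1 - rho i) ^+ l.-1 * rho i)%:E)
    /\ (forall k r : nat, (r <= k)%N ->
          P [set w | new_versions VS k t w = r%:Z]
            = ('C(k, r)%:R * pg ^+ r * (1 - pg) ^+ (k - r))%:E)
    /\ (forall k r : nat, (1 <= k)%N -> (r <= k)%N ->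
          P [set w | m w = k /\ new_versions VS k t w = r%:Z]
            = (P [set w | m w = k]
               * ('C(k, r)%:R * pg ^+ r * (1 - pg) ^+ (k - r))%:E)%E).
Proof.
move=> mgen msucc Pgen Psucc Hind rho_pos HVS HV0 HVrel i Hi t m.
pose E := model_events gen succ.
pose q (e : ev_index) : R := match e with inl _ => pg | inr x => rho x.1 end.
have mE : forall e, measurable (E e) by case=> [s|[k s]] /=.
have PE : forall e, P (E e) = (q e)%:E by case=> [s|[k s]] /=.
have mP : forall w l, (0 < l)%N -> (m w = l <-> succ i (t - l%:Z) w /\
    forall j, (0 < j < l)%N -> ~ succ i (t - j%:Z) w).
  move=> w l l0; rewrite /m /last_succ; case: pselect => [h|h].
    case: ex_minnP => n /asboolP [n0 sn] nmin; split.
      move=> nl; rewrite -nl; split => // j /andP [j0 jn] sj.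
      have := nmin j (asboolT (conj j0 sj)); lia.
    move=> [sl hl]; apply/eqP; rewrite eqn_leq; apply/andP; split.
      exact: nmin l (asboolT (conj l0 sl)).
    case: (leqP l n) => // nl; exfalso; apply: (hl n) => //; lia.
  split => [H|[sl _]]; first lia.
  by exfalso; apply: h; exists l; apply/asboolP; split.

pose L n : seq (ev_index * bool) := [seq (inr (i, t - (j.+1)%:Z), false) | j <- iota 0 n].
pose um l := (inr (i, t - l%:Z), true) :: L l.-1.
have sgnL : forall n w, sgn E (L n) w <-> forall j, (0 < j <= n)%N -> ~ succ i (t - j%:Z) w.
  move=> n w; rewrite sgnE; split.
    move=> H j /andP[j0 jn]; apply: (H (inr (i, t - j%:Z), false)).
    apply/mapP; exists j.-1; first by rewrite mem_iota; lia.
    by rewrite prednK.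
  move=> H x /mapP [j]; rewrite mem_iota => jn -> /=; apply: H; lia.
have uniqL : forall n, uniq (map fst (L n)).
  move=> n; rewrite -map_comp map_inj_uniq ?iota_uniq // => a b /= [] H; lia.
have sqL : forall n, sq q (L n) = (1 - rho i) ^+ n.
  by move=> n; rewrite /sq big_map /= prod_const size_iota.
have Hm : forall l, (0 < l)%N -> [set w | m w = l] = sgn E (um l).
  move=> l l0; apply/seteqP; split => w; rewrite /= sgn_cons /= mP //.
    by case=> s H; split => //; apply/sgnL => j hj; apply: H; lia.
  by case=> s /sgnL H; split => // j hj; apply: H; lia.
have uniqum : forall l, (0 < l)%N -> uniq (map fst (um l)).
  move=> l l0; rewrite /= uniqL andbT; apply/mapP => -[x /mapP [j]].
  rewrite mem_iota => jn -> /= [] H; lia.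
have squm : forall l, sq q (um l) = rho i * (1 - rho i) ^+ l.-1.
  by move=> l; rewrite sq_cons sqL.

pose sv k : seq ev_index := [seq inl (t - (j.+1)%:Z) | j <- iota 0 k].
have nvE : forall k w, new_versions VS k t w = (cnt E (sv k) w)%:Z.
  elim=> [|k IH] w; first by rewrite /new_versions /cnt /= subr0 subrr.
  have e1 : t - (k.+1)%:Z + 1 = t - k%:Z by lia.
  have := HVS (t - (k.+1)%:Z) w; rewrite e1 => e2.
  move: (IH w); rewrite /new_versions => IHk.
  rewrite (_ : sv k.+1 = sv k ++ [:: inl (t - (k.+1)%:Z)]); last first.
    by rewrite /sv -addn1 iotaD map_cat add0n /= addn1.
  rewrite /cnt count_cat /= addn0 PoszD -/(cnt E (sv k) w) -IHk e2 /E /=.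
  ring.
have nvset : forall k r, [set w | new_versions VS k t w = r%:Z] = [set w | cnt E (sv k) w = r].
  by move=> k r; apply/seteqP; split => w /=; rewrite nvE; [case | move=> ->].
have uniqsv : forall k, uniq (sv k).
  move=> k; rewrite map_inj_uniq ?iota_uniq // => a b [] H; lia.
have qsv : forall k j, j \in sv k -> q j = pg by move=> k j /mapP [x _ ->].
have sizesv : forall k, size (sv k) = k by move=> k; rewrite size_map size_iota.

have Part2 : forall l : nat, (1 <= l)%N ->
    P [set w | m w = l] = ((1 - rho i) ^+ l.-1 * rho i)%:E.
  by move=> l l0; rewrite Hm // (sgnP mE PE) ?uniqum // squm mulrC.
have Part3 : forall k r : nat, (r <= k)%N ->
    P [set w | new_versions VS k t w = r%:Z]
      = ('C(k, r)%:R * pg ^+ r * (1 - pg) ^+ (k - r))%:E.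
  move=> k r rk; rewrite nvset -(setTI [set w | _]).
  have -> : [set: T] = sgn E [::] by rewrite /sgn big_nil.
  rewrite (cntP mE PE Hind (p:=pg)); [ | by rewrite /= uniqsv | exact: qsv].
  by rewrite sizesv /sq big_nil mul1r.
have Part4 : forall k r : nat, (1 <= k)%N -> (r <= k)%N ->
    P [set w | m w = k /\ new_versions VS k t w = r%:Z]
      = (P [set w | m w = k] * ('C(k, r)%:R * pg ^+ r * (1 - pg) ^+ (k - r))%:E)%E.
  move=> k r k0 rk.
  rewrite (_ : [set w | m w = k /\ new_versions VS k t w = r%:Z] =
     [set w | m w = k] `&` [set w | new_versions VS k t w = r%:Z]) //.
  rewrite nvset Hm // (sgnP mE PE) ?uniqum // (cntP mE PE Hind (p:=pg)).
  - by rewrite sizesv -EFinM.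
  - rewrite cat_uniq uniqum // uniqsv andbT /=.
    apply/hasPn => x /mapP [j _ ->]; rewrite inE negb_or; apply/andP; split => //.
    by apply/mapP => -[y /mapP [l _ ->]].
  - exact: qsv.

have rho1 : rho i <= 1.
  by rewrite -lee_fin -(Psucc i t); apply: (probability_le1 P (msucc i t)).
have rho0 : 0 < rho i by apply: rho_pos.
have stay : forall w n, (forall j, (0 < j <= n)%N -> ~ succ i (t - j%:Z) w) ->
    V i.+1 t w = V i.+1 (t - n%:Z) w.
  move=> w; elim=> [|n IH] H; first by rewrite subr0.
  rewrite IH; last by move=> j hj; apply: H; lia.
  have e1 : t - (n.+1)%:Z + 1 = t - n%:Z by lia.
  rewrite -e1 HVrel // asboolF //; apply: H; lia.
pose Z := \bigcap_(n : nat) (~` succ i (t - (n.+1)%:Z)).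
have key : forall w, ~ Z w -> V i.+1 t w = V i (t - (m w)%:Z) w.
  move=> w nZ.
  have [l [l0 sl]] : exists l, (0 < l)%N /\ succ i (t - l%:Z) w.
    case: (pselect (exists l, (0 < l)%N /\ succ i (t - l%:Z) w)) => // nex.
    by exfalso; apply: nZ => n _ sn; apply: nex; exists n.+1.
  have m0 : (0 < m w)%N.
    rewrite /m /last_succ; case: pselect => [h|h].
      by case: ex_minnP => n /asboolP [].
    by exfalso; apply: h; exists l; apply/asboolP; split.
  have [sm hm] := (mP w (m w) m0).1 erefl.
  move: sm hm; case: (m w) m0 => // n _ sm hm.
  rewrite (stay w n); last by move=> j hj; apply: hm; lia.
  have e1 : t - (n.+1)%:Z + 1 = t - n%:Z by lia.
  by rewrite -e1 HVrel // asboolT.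
have mZ : measurable Z by apply: bigcapT_measurable => n; apply: measurableC.
have PZ : P Z = 0%E.
  have bnd : forall n, (P Z <= ((1 - rho i) ^+ n)%:E)%E.
    move=> n; rewrite -sqL -(sgnP mE PE Hind (uniqL n)).
    apply: Ple => //; first exact: sgn_meas.
    move=> w Zw; apply/sgnL => j /andP [j0 jn].
    by have := Zw j.-1 Logic.I; rewrite prednK.
  have z0 : (0 <= P Z)%E by apply: measure_ge0.
  move: (P Z) z0 bnd => [z| |] z0 bnd; last first.
  - by rewrite leeNy_eq in z0.
  - by have := bnd 0%N; rewrite leye_eq.
  congr (_%:E); apply/le_anti/andP; split; last by rewrite -lee_fin.
  have Hc : `|1 - rho i| < 1 by rewrite ger0_norm; lra.
  apply: (cvgr_to_ge (cvg_expr Hc)); apply: nearW => n.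
  by rewrite -lee_fin; apply: bnd.
have ae : forall A : set T, (forall w, ~ Z w -> A w) -> almost_everywhere P A.
  move=> A HA; exists Z; split => // w /= nA.
  by case: (pselect (Z w)) => // nZ; exfalso; apply: nA; apply: HA.
split; last by split.
split; apply: ae => w nZ /=; first exact: key.
by rewrite /vaoi /new_versions (key w nZ); ring.
Qed.
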